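(* Let $T$ be a tree with exactly three pendant vertices $u_1,u_2,u_3$ and let $m$ be its major vertex, with $d(u_1,m)\equiv 0$, $d(u_2,m)\equiv 2$ and $d(u_3,m)\equiv 0\pmod 3$. Then $1$ is an eigenvalue of $L(T)$.
   Context: $L(T)=D(T)-A(T)$ is the Laplacian matrix of $T$. A pendant vertex has degree $1$; a major vertex has degree at least $3$. $d$ denotes distance. *)

(* Defs.v *)
From mathcomp Require Import all_boot all_order all_algebra.
Set Implicit Arguments. Unset Strict Implicit. Unset Printing Implicit Defensive.
Import GRing.Theory Num.Theory.

Definition simple_graph (n : nat) (e : rel 'I_n) : Prop :=
  symmetric e /\ irreflexive e.

Definition connected_graph (n : nat) (e : rel 'I_n) : Prop :=
  forall u v : 'I_n, connect e u v.

Definition acyclic_graph (n : nat) (e : rel 'I_n) : Prop :=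
  forall c : seq 'I_n, 2 < size c -> uniq c -> ~~ cycle e c.

Definition is_tree (n : nat) (e : rel 'I_n) : Prop :=
  [/\ simple_graph e, connected_graph e & acyclic_graph e].

Definition deg (n : nat) (e : rel 'I_n) (v : 'I_n) : nat := #|[set w | e v w]|.

Definition pendant (n : nat) (e : rel 'I_n) (v : 'I_n) : bool := deg e v == 1%N.
Definition major (n : nat) (e : rel 'I_n) (v : 'I_n) : bool := (3 <= deg e v)%N.

Definition walk_of_len (n : nat) (e : rel 'I_n) (u v : 'I_n) (k : nat) : Prop :=
  exists p : seq 'I_n, [/\ size p = k, path e u p & last u p = v].

Definition is_dist (n : nat) (e : rel 'I_n) (u v : 'I_n) (k : nat) : Prop :=
  walk_of_len e u v k /\ forall j, (j < k)%N -> ~ walk_of_len e u v j.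

Local Open Scope ring_scope.

Definition degree_mx (R : nzRingType) (n : nat) (e : rel 'I_n) : 'M[R]_n :=
  \matrix_(i, j) (if i == j then (deg e i)%:R else 0).

Definition adjacency_mx (R : nzRingType) (n : nat) (e : rel 'I_n) : 'M[R]_n :=
  \matrix_(i, j) (if e i j then 1 else 0).

Definition laplacian_mx (R : nzRingType) (n : nat) (e : rel 'I_n) : 'M[R]_n :=
  degree_mx R e - adjacency_mx R e.

(* Main.v *)
Require Import Defs.
From mathcomp Require Import all_boot all_order all_algebra.
From mathcomp Require Import zify ring lra.
Set Implicit Arguments. Unset Strict Implicit. Unset Printing Implicit Defensive.
Import GRing.Theory Num.Theory.

Section Tree.
Variables (n : nat) (e : rel 'I_n).
Hypothesis esym : symmetric e.
Hypothesis eirr : irreflexive e.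
Hypothesis econn : connected_graph e.
Hypothesis eacyc : acyclic_graph e.
Variable m : 'I_n.

Fixpoint wb k (u v : 'I_n) : bool :=
  if k is k'.+1 then [exists w, e u w && wb k' w v] else u == v.

Lemma wbP k u v : reflect (walk_of_len e u v k) (wb k u v).
Proof.
elim: k u => [|k IH] u /=.
  apply: (iffP eqP) => [->|[p [sp _ lp]]]; first by exists [::].
  by move: sp lp; case: p.
apply: (iffP existsP) => [[w /andP[euw /IH [p [sp pp lp]]]]|[[|w p] [sp pp lp]]] //.
  by exists (w :: p); rewrite /= sp euw pp lp.
move: pp => /= /andP[euw pp]; exists w; rewrite euw /=; apply/IH.
by exists p; split => //; case: sp.
Qed.

Lemma wb_cat a b u v w : wb a u v -> wb b v w -> wb (a + b) u w.
Proof.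
elim: a u => [|a IH] u /=; first by move/eqP->.
move=> /existsP[x /andP[eux hx]] hb; apply/existsP; exists x.
by rewrite eux (IH _ hx hb).
Qed.

Lemma wbS k u v : wb k.+1 u v = [exists w, e u w && wb k w v].
Proof. by []. Qed.

Lemma wbSr k u v : wb k.+1 u v = [exists w, wb k u w && e w v].
Proof.
elim: k u => [|k IH] u.
  rewrite wbS; apply/existsP/existsP => [[w /andP[euw /eqP <-]]|[w /andP[/eqP <- ewv]]].
    by exists u; rewrite /= eqxx.
  by exists v; rewrite /= ewv eqxx.
apply/idP/idP.
  rewrite wbS => /existsP[w /andP[euw hw]]; move: hw; rewrite IH => /existsP[x /andP[hx exv]].
  apply/existsP; exists x; rewrite exv andbT wbS; apply/existsP; exists w.
  by rewrite euw hx.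
move=> /existsP[x /andP[hx exv]]; move: hx; rewrite wbS => /existsP[w /andP[euw hx]].
rewrite wbS; apply/existsP; exists w; rewrite euw IH; apply/existsP; exists x.
by rewrite hx exv.
Qed.

Lemma wb_sym k u v : wb k u v = wb k v u.
Proof.
elim: k u v => [|k IH] u v; first by rewrite /= eq_sym.
rewrite wbSr wbS; apply/existsP/existsP => [[w /andP[hw ewv]]|[w /andP[evw hw]]].
  by exists w; rewrite esym ewv IH hw.
by exists w; rewrite IH hw esym evw.
Qed.

Lemma ex_walk v : exists k, wb k m v.
Proof.
have /connectP[p pp lp] := econn m v.
exists (size p); apply/wbP; by exists p.
Qed.

Definition D v := ex_minn (ex_walk v).

Lemma D_walk v : wb (D v) m v.
Proof. by rewrite /D; case: (ex_minnP (ex_walk v)). Qed.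

Lemma D_min v k : wb k m v -> D v <= k.
Proof. by rewrite /D; case: (ex_minnP (ex_walk v)) => j _ H /H. Qed.

Lemma D0 v : (D v == 0) = (v == m).
Proof.
apply/idP/idP => [/eqP h|/eqP->].
  by have := D_walk v; rewrite h /= eq_sym.
rewrite -leqn0; apply: (@D_min m 0); exact: eqxx.
Qed.

Lemma Dm : D m = 0.
Proof. by apply/eqP; rewrite D0. Qed.

Lemma D_edge v w : e v w -> D w <= (D v).+1.
Proof.
move=> evw; rewrite -addn1; apply: D_min; apply: wb_cat (D_walk v) _.
by apply/existsP; exists w; rewrite evw /=.
Qed.

Lemma D_par v : v != m -> exists2 p, e v p & (D p).+1 = D v.
Proof.
rewrite -D0 => hv; have := D_walk v; rewrite wb_sym.
case E: (D v) hv => [|k] // _; rewrite wbS => /existsP[p /andP[evp hp]].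
exists p => //; rewrite wb_sym in hp; have h1 := D_min hp.
have h2 : D v <= (D p).+1 by apply: D_edge; rewrite esym.
lia.
Qed.

Lemma path_wb u p : path e u p -> wb (size p) u (last u p).
Proof. by move=> pp; apply/wbP; exists p. Qed.

Lemma walk_mem u p z : path e u p -> z \in p ->
  exists i, [/\ i < size p, wb i.+1 u z & wb (size p - i.+1) z (last u p)].
Proof.
elim: p u => [|a p IH] u // /andP[eua pp]; rewrite inE => /orP[/eqP->|zp].
  exists 0; split => //; last by rewrite /= subn1 /=; apply: path_wb.
  by rewrite wbS; apply/existsP; exists a; rewrite eua /= eqxx.
have [i [hi h1 h2]] := IH a pp zp.
exists i.+1; split => //.
by rewrite wbS; apply/existsP; exists a; rewrite eua h1.
Qed.

Lemma no_cycle x a r : e x a -> path e a r -> e (last a r) x ->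
  a != last a r -> x \notin a :: r -> False.
Proof.
move=> exa par elx nal xn.
case: (shortenP par) elx nal => r' pr' ur' sub elx nal.
have : cycle e [:: x, a & r'] by rewrite /= exa rcons_path pr' elx.
apply/negP/eacyc.
  by case: r' {pr' ur' sub elx} nal => //=; rewrite eqxx.
rewrite cons_uniq ur' andbT; apply/negP; rewrite inE => /orP[/eqP xa|xr].
  by move: xn; rewrite xa inE eqxx.
by move: xn; rewrite inE (sub _ xr) orbT.
Qed.

Lemma par_uniq v p q : e v p -> e v q -> D p < D v -> D q < D v -> p = q.
Proof.
move=> evp evq hp hq; apply/eqP/negPn/negP => npq.
have /wbP[r1 [s1 p1 l1]] : wb (D p) p m by rewrite wb_sym D_walk.
have /wbP[r2 [s2 p2 l2]] := D_walk q.
apply: (@no_cycle v p (r1 ++ r2)) => //.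
- by rewrite cat_path p1 l1 p2.
- by rewrite last_cat l1 l2 esym.
- by rewrite last_cat l1 l2.
rewrite inE mem_cat negb_or; apply/andP; split.
  by apply/eqP => vp; move: hp; rewrite vp ltnn.
rewrite negb_or; apply/andP; split; apply/negP => hv.
  have [i [hi _ h]] := walk_mem p1 hv; rewrite l1 wb_sym in h.
  have := D_min h; lia.
have [i [hi h _]] := walk_mem p2 hv; have := D_min h; lia.
Qed.

Lemma D_neq v w : e v w -> D v != D w.
Proof.
move=> evw; apply/negP => /eqP hvw.
case: (eqVneq v m) => [vm|vm].
  have /eqP wm : w == m by rewrite -D0 -hvw D0 vm.
  by move: evw; rewrite vm wm eirr.
have [p evp hp] := D_par vm.
have /wbP[r1 [s1 p1 l1]] : wb (D p) p m by rewrite wb_sym D_walk.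
have /wbP[r2 [s2 p2 l2]] := D_walk w.
apply: (@no_cycle v p (r1 ++ r2)) => //.
- by rewrite cat_path p1 l1 p2.
- by rewrite last_cat l1 l2 esym.
- by rewrite last_cat l1 l2; apply/eqP => pw; move: hp; rewrite pw hvw; lia.
rewrite inE mem_cat negb_or; apply/andP; split.
  by apply/eqP => vp; move: hp; rewrite -vp; lia.
rewrite negb_or; apply/andP; split; apply/negP => hv.
  have [i [hi _ h]] := walk_mem p1 hv; rewrite l1 wb_sym in h.
  have := D_min h; lia.
have [i [hi h h']] := walk_mem p2 hv; have := D_min h => hle.
have E : size r2 - i.+1 = 0 by lia.
rewrite E l2 /= in h'; move/eqP: h' => vw.
by move: evw; rewrite vw eirr.
Qed.

Lemma D_edge2 v w : e v w -> D w = (D v).+1 \/ D v = (D w).+1.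
Proof.
move=> evw; have h1 := D_edge evw.
have h2 : D v <= (D w).+1 by apply: D_edge; rewrite esym.
have /eqP h3 := D_neq evw; lia.
Qed.

Definition par v := odflt v [pick w | e v w && (D w < D v)].

Lemma par_spec v : v != m -> e v (par v) /\ (D (par v)).+1 = D v.
Proof.
move=> vm; rewrite /par; case: pickP => [w /andP[evw hw]|H] /=.
  by split => //; have := D_edge2 evw; lia.
have [p evp hp] := D_par vm.
by have := H p; rewrite evp /= -hp ltnSn.
Qed.

Lemma par_m : par m = m.
Proof. by rewrite /par; case: pickP => [w /andP[_]|] //; rewrite Dm. Qed.

Lemma D_par' v : D (par v) = (D v).-1.
Proof.
case: (eqVneq v m) => [->|vm]; first by rewrite par_m Dm.
by have [_ <-] := par_spec vm.
Qed.

Lemma par_eq v w : e v w -> D w < D v -> par v = w.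
Proof.
move=> evw hw; have vm : v != m by rewrite -D0; lia.
have [h1 h2] := par_spec vm; apply: par_uniq h1 evw _ hw; lia.
Qed.

Definition ch v := [set w | e v w && (D v < D w)].
Definition up v := [set w | e v w && (D w < D v)].

Lemma up_card v : #|up v| = (v != m).
Proof.
case: (eqVneq v m) => [->|vm] /=.
  apply/eqP; rewrite cards_eq0; apply/eqP/setP => w; rewrite !inE Dm.
  by rewrite ltn0 andbF.
have -> : up v = [set par v]; last by rewrite cards1.
have [h1 h2] := par_spec vm.
apply/setP => w; rewrite !inE; apply/andP/eqP => [[evw hw]|->].
  by rewrite (par_eq evw hw).
by split => //; lia.
Qed.

Lemma deg_split v : deg e v = #|ch v| + #|up v|.
Proof.
rewrite /deg -(cardsID (ch v) [set w | e v w]); congr (_ + _).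
  by apply: eq_card => w; rewrite !inE; case: (e v w).
apply: eq_card => w; rewrite !inE; case evw: (e v w) => //=.
by have := D_edge2 evw; case: ltngtP; lia.
Qed.

Lemma sum_ch : (\sum_v #|ch v|)%N = n.-1.
Proof.
have -> : (\sum_v #|ch v| = \sum_v \sum_w ((w \in ch v) : nat))%N.
  apply: eq_bigr => v _; rewrite -sum1_card big_mkcond; apply: eq_bigr => i _; by case: (_ \in _).
rewrite exchange_big /=.
have -> : (\sum_w \sum_v ((w \in ch v) : nat) = \sum_w #|up w|)%N.
  apply: eq_bigr => w _; rewrite -sum1_card [RHS]big_mkcond; apply: eq_bigr => v _.
  by rewrite !inE (esym w v); case: (_ && _).
rewrite (eq_bigr _ (fun w _ => up_card w)) (bigD1 m) //= eqxx add0n.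
rewrite (eq_bigr (fun _ => 1%N)); last by move=> w ->.
by rewrite sum1_card cardC1 card_ord.
Qed.

Variables (u1 u2 u3 : 'I_n).
Hypothesis Luniq : uniq [:: u1; u2; u3].
Hypothesis hpend : forall v, pendant e v = (v \in [:: u1; u2; u3]).
Hypothesis hmaj : major e m.

Lemma m_notin : m \notin [:: u1; u2; u3].
Proof. by rewrite -hpend /pendant; move: hmaj; rewrite /major; case: (deg e m) => [|[|]]. Qed.

Definition b v := if v == m then 3 else if v \in [:: u1; u2; u3] then 0 else 1.

Lemma b_le v : b v <= #|ch v|.
Proof.
rewrite /b; case: (eqVneq v m) => [->|vm].
  by move: hmaj; rewrite /major deg_split up_card eqxx addn0.
case: ifP => // vL; have := hpend v; rewrite vL /pendant deg_split up_card vm.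
by case: #|ch v|.
Qed.

Lemma sum_b : (\sum_v b v)%N = n.-1.
Proof.
have H : (\sum_v (b v + (v \in [:: u1; u2; u3])) = \sum_v (1 + (v == m) * 2))%N.
  apply: eq_bigr => v _; rewrite /b; case: (eqVneq v m) => [->|vm].
    by rewrite (negbTE m_notin).
  by case: (v \in _).
rewrite !big_split /= in H.
have HL : (\sum_v ((v \in [:: u1; u2; u3]) : nat) = 3)%N.
  rewrite -[3%N]/(size [:: u1; u2; u3]) -(card_uniqP Luniq) -sum1_card .
  rewrite [RHS]big_mkcond; apply: eq_bigr => i _.
  by case: (_ \in _).
have Hm : (\sum_v ((v == m) * 2) = 2)%N.
  rewrite (bigD1 m) //= eqxx big1 // => v /negbTE ->; by [].
rewrite HL Hm sum1_card card_ord in H.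
have : 0 < n by case: (n) m => [[]|].
move: H; set S := (\sum_(i < n) b i)%N. clearbody S. lia.
Qed.

Lemma ch_b v : #|ch v| = b v.
Proof.
have h1 := b_le v; have h3 := sum_ch; have h4 := sum_b.
rewrite (bigD1 v) //= in h3; rewrite (bigD1 v) //= in h4.
have h2 : (\sum_(i < n | i != v) b i <= \sum_(i < n | i != v) #|ch i|)%N.
  by apply: leq_sum => w _; apply: b_le.
move: h2 h3 h4; set A := (\sum_(i < n | i != v) b i)%N; set B := (\sum_(i < n | i != v) #|ch i|)%N.
move: h1; set c := #|ch v|; set bv := b v; clearbody c bv. lia.
Qed.

Lemma ch_m : #|ch m| = 3.
Proof. by rewrite ch_b /b eqxx. Qed.

Lemma ch_L v : v \in [:: u1; u2; u3] -> ch v = set0.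
Proof.
move=> vL; apply: cards0_eq; rewrite ch_b /b vL.
by case: eqVneq => // vm; move: m_notin; rewrite -vm vL.
Qed.

Lemma ch_mid v : v != m -> v \notin [:: u1; u2; u3] -> #|ch v| = 1.
Proof. by move=> vm vL; rewrite ch_b /b (negbTE vm) (negbTE vL). Qed.

Lemma ne_m_L v : v \in [:: u1; u2; u3] -> v != m.
Proof. by move=> vL; apply/eqP => vm; move: m_notin; rewrite -vm vL. Qed.

Definition s v := (v != m) && (iter (D u2 - D v) par u2 == v).

Lemma D_iter k w : D (iter k par w) = D w - k.
Proof. by elim: k => [|k IH]; rewrite ?subn0 // iterS D_par' IH subnS. Qed.

Lemma u2L : u2 \in [:: u1; u2; u3].
Proof. by rewrite !inE eqxx orbT. Qed.

Lemma u2_ne : u2 != m.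
Proof. exact: ne_m_L u2L. Qed.

Lemma s_child w c : w != m -> c \in ch w -> s c = s w.
Proof.
move=> wm cw; move: (cw); rewrite inE => /andP[ewc hwc].
have Dc : D c = (D w).+1 by have := D_edge2 ewc; lia.
have pc : par c = w by apply: par_eq; [rewrite esym | lia].
have cm : c != m by rewrite -D0 Dc.
have wL : w \notin [:: u1; u2; u3].
  by apply/negP => /ch_L chw; move: cw; rewrite chw inE.
have [c' chw] : exists c', ch w = [set c'] by apply/cards1P; rewrite ch_mid.
rewrite /s cm wm /=; apply/eqP/eqP => h.
  have := D_iter (D u2 - D c) u2; rewrite h Dc => hD.
  have -> : D u2 - D w = (D u2 - D c).+1 by lia.
  by rewrite iterS h pc.
have hD := D_iter (D u2 - D w) u2; rewrite h in hD.
case: (ltnP (D w) (D u2)) => hlt; last first.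
  have E : D u2 - D w = 0 by lia.
  by move: h wL; rewrite E /= => <-; rewrite u2L.
set z := iter (D u2 - D c) par u2.
have Dz : D z = D c by rewrite D_iter; lia.
have pz : par z = w.
  by rewrite -h; have -> : D u2 - D w = (D u2 - D c).+1 by lia.
have zm : z != m by rewrite -D0 Dz Dc.
have [ez _] := par_spec zm; rewrite pz in ez.
have : z \in ch w by rewrite inE esym ez Dz Dc ltnSn.
rewrite chw inE => /eqP ->; move: cw; rewrite chw inE => /eqP ->.
by [].
Qed.

Lemma s_m : s m = false.
Proof. by rewrite /s eqxx. Qed.

Lemma s_u2 : s u2.
Proof. by rewrite /s u2_ne subnn eqxx. Qed.

Lemma s_leaf u : u \in [:: u1; u2; u3] -> u != u2 -> s u = false.
Proof.
move=> uL uu2; rewrite /s (ne_m_L uL) /=; apply/negbTE/eqP => h.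
case E: (D u2 - D u) h => [|k] h.
  by move: uu2; rewrite -h eqxx.
have hu := D_iter k.+1 u2; rewrite h in hu.
rewrite iterS in h; set z := iter k par u2 in h.
have Dz : D z = D u2 - k by rewrite D_iter.
have zm : z != m by rewrite -D0 Dz; lia.
have [ez _] := par_spec zm; rewrite h in ez.
have : z \in ch u by rewrite inE esym ez Dz; lia.
by rewrite ch_L // inE.
Qed.

Lemma ch_m_s i : i \in ch m -> s i = (iter (D u2).-1 par u2 == i).
Proof.
rewrite inE Dm => /andP[emi hi].
have Di : D i = 1 by have := D_edge2 emi; rewrite Dm; lia.
have im : i != m by rewrite -D0 Di.
by rewrite /s im Di subn1.
Qed.

Lemma c0_in : iter (D u2).-1 par u2 \in ch m.
Proof.
have h1 : 0 < D u2 by rewrite lt0n D0 u2_ne.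
set z := iter (D u2).-1 par u2.
have Dz : D z = 1 by rewrite D_iter; lia.
have zm : z != m by rewrite -D0 Dz.
have [ez hz] := par_spec zm.
have pz : par z = m by apply/eqP; rewrite -D0; rewrite Dz in hz; lia.
by rewrite inE Dm Dz andbT -pz esym ez.
Qed.

Lemma par_ch v : v != m -> v \in ch (par v).
Proof.
move=> vm; have [h1 h2] := par_spec vm.
by rewrite inE esym h1 -h2 ltnSn.
Qed.

Lemma s_par v : v != m -> par v != m -> s (par v) = s v.
Proof. by move=> vm pm; rewrite (s_child pm (par_ch vm)). Qed.

Variable R : realFieldType.
Local Open Scope ring_scope.

Fixpoint g (t : nat) : R :=
  if t is t'.+1 then (if t' is t''.+1 then g t' - g t'' else 1) else 1.

Lemma gSS t : g t.+2 = g t.+1 - g t.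
Proof. by []. Qed.

Lemma g3 t : g t.+3 = - g t.
Proof. by rewrite gSS gSS addrAC subrr add0r. Qed.

Lemma g_zero t : (t %% 3 = 2)%N -> g t = 0.
Proof.
move=> h; rewrite (divn_eq t 3) h; elim: (t %/ 3)%N => [|q IH].
  by rewrite /= subrr.
have -> : (q.+1 * 3 + 2 = (q * 3 + 2).+3)%N by lia.
by rewrite g3 IH oppr0.
Qed.

Lemma g_par v : v != m -> g (D (par v) + s (par v)) = g ((D v).-1 + s v).
Proof.
move=> vm; have [h1 h2] := par_spec vm.
case: (eqVneq (par v) m) => pm.
  rewrite pm Dm s_m; rewrite pm Dm in h2; rewrite -h2 /=.
  by case: (s v).
by rewrite s_par // D_par'.
Qed.

Definition x : 'rV[R]_n := \row_v g (D v + s v).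

Lemma nbr_sum j (F : 'I_n -> R) :
  \sum_i F i * (if e i j then 1 else 0) = \sum_(i in ch j) F i + \sum_(i in up j) F i.
Proof.
rewrite [X in _ = X + _]big_mkcond [X in _ = _ + X]big_mkcond -big_split.
apply: eq_bigr => i _; rewrite !inE (esym j i).
case eij: (e i j); last by rewrite /= mulr0 addr0.
rewrite mulr1 /=; have [h|h] := D_edge2 eij.
  have -> : (D j < D i)%N = false by apply/negbTE; rewrite -leqNgt; lia.
  have -> : (D i < D j)%N by lia.
  by rewrite add0r.
have -> : (D i < D j)%N = false by apply/negbTE; rewrite -leqNgt; lia.
have -> : (D j < D i)%N by lia.
by rewrite addr0.
Qed.

Lemma Lx j : (x *m laplacian_mx R e) 0 j =
  x 0 j * (deg e j)%:R - \sum_(i in ch j) x 0 i - \sum_(i in up j) x 0 i.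
Proof.
rewrite mxE /laplacian_mx.
under eq_bigr => i _ do rewrite !mxE mulrBr.
rewrite sumrB (bigD1 j) //= eqxx big1 => [|i /negbTE ->]; last by rewrite mulr0.
rewrite addr0 -addrA -opprD -nbr_sum mxE; congr (_ - _).
by apply: eq_bigr => i _; rewrite mxE.
Qed.

Lemma xE i : x 0 i = g (D i + s i).
Proof. by rewrite mxE. Qed.

Lemma up_par j : j != m -> up j = [set par j].
Proof.
move=> jm; have [h1 h2] := par_spec jm.
have : par j \in up j by rewrite inE h1 -h2 ltnSn.
have /cards1P[y ->] : #|up j| == 1%N by rewrite up_card jm.
by rewrite inE => /eqP ->.
Qed.

Hypothesis hleaf : forall j, j \in [:: u1; u2; u3] -> (((D j).-1 + s j) %% 3 = 2)%N.

Lemma Lx_eq j : (x *m laplacian_mx R e) 0 j = x 0 j.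
Proof.
rewrite Lx; case: (eqVneq j m) => [->|jm].
  rewrite deg_split ch_m up_card eqxx /= addn0.
  have -> : up m = set0 by apply: cards0_eq; rewrite up_card eqxx.
  rewrite big_set0 subr0.
  have -> : \sum_(i in ch m) x 0 i = \sum_(i in ch m) (1 - ((iter (D u2).-1 par u2 == i) : nat)%:R).
    apply: eq_bigr => i hi; rewrite xE ch_m_s //.
    have Di : D i = 1%N.
      by move: hi; rewrite inE Dm => /andP[emi _]; have := D_edge2 emi; rewrite Dm; lia.
    by rewrite Di; case: (_ == i) => /=; rewrite ?subrr ?subr0.
  rewrite sumrB sumr_const ch_m (bigD1 _ c0_in) /= eqxx big1 => [|i /andP[_ ne]]; last by rewrite eq_sym (negbTE ne).
  rewrite xE Dm s_m /= addr0 mul1r.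
  change (1 *+ 3 : R) with (3%:R : R); lra.
rewrite up_par // big_set1 (xE (par j)) (g_par jm).
case jL: (j \in [:: u1; u2; u3]).
  rewrite ch_L // big_set0 g_zero ?hleaf // deg_split up_card jm ch_L // cards0 /=.
  lra.
have [c chj] : exists c, ch j = [set c] by apply/cards1P; rewrite ch_mid ?jL.
have cj : c \in ch j by rewrite chj inE.
rewrite chj big_set1 (xE c) (s_child jm cj) deg_split up_card jm; rewrite ?chj cards1 /=.
move: cj; rewrite inE => /andP[ejc hjc].
have Dc : D c = (D j).+1 by have := D_edge2 ejc; lia.
have : (0 < D j)%N by rewrite lt0n D0.
rewrite (xE j) Dc; case: (D j) => [|d] // _.
rewrite !addSn -pred_Sn gSS. lra.
Qed.

Variables (k1 k2 k3 : nat).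
Hypothesis hd1 : is_dist e u1 m k1.
Hypothesis hd2 : is_dist e u2 m k2.
Hypothesis hd3 : is_dist e u3 m k3.
Hypothesis hk1 : (k1 %% 3 = 0)%N.
Hypothesis hk2 : (k2 %% 3 = 2)%N.
Hypothesis hk3 : (k3 %% 3 = 0)%N.

Lemma D_dist u k : is_dist e u m k -> D u = k.
Proof.
move=> [hw hmin]; have h1 : wb k m u by rewrite wb_sym; apply/wbP.
have h3 := D_min h1; case: (ltnP (D u) k) => h2; last by apply/eqP; rewrite eqn_leq h3 h2.
exfalso; apply: (hmin _ h2); apply/wbP; rewrite wb_sym; exact: D_walk.
Qed.

Lemma hleaf_ok j : j \in [:: u1; u2; u3] -> (((D j).-1 + s j) %% 3 = 2)%N.
Proof.
move=> jL; have jm := ne_m_L jL; have : (0 < D j)%N by rewrite lt0n D0.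
have u12 : u1 != u2 by apply/eqP => h; move: Luniq; rewrite h /= !inE eqxx.
have u32 : u3 != u2 by apply/eqP => h; move: Luniq; rewrite h /= !inE eqxx /= ?andbF.
move: (jL); rewrite !inE => /or3P[] /eqP ->.
- by rewrite s_leaf ?(D_dist hd1) ?inE ?eqxx //=; lia.
- by rewrite s_u2 (D_dist hd2) /=; lia.
- by rewrite s_leaf ?(D_dist hd3) ?inE ?eqxx ?orbT //=; lia.
Qed.

End Tree.


Local Open Scope ring_scope.

Theorem mainTheorem7 (R : realFieldType) (n : nat) (e : rel 'I_n)
    (u1 u2 u3 m : 'I_n) (k1 k2 k3 : nat) :
  is_tree e ->
  uniq [:: u1; u2; u3] ->
  (forall v : 'I_n, pendant e v = (v \in [:: u1; u2; u3])) ->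
  major e m ->
  is_dist e u1 m k1 -> is_dist e u2 m k2 -> is_dist e u3 m k3 ->
  (k1 %% 3 = 0)%N -> (k2 %% 3 = 2)%N -> (k3 %% 3 = 0)%N ->
  eigenvalue (laplacian_mx R e) 1.
Proof.
move=> [[es ei] ec ea] hu hp hm h1 h2 h3 hk1 hk2 hk3.
have hl := hleaf_ok es ei ec ea hu hp hm h1 h2 h3 hk1 hk2 hk3.
apply/eigenvalueP; exists (x ec m u2 R).
  rewrite scale1r; apply/rowP => j; exact: (Lx_eq es ei ea hu hp hm R hl j).
apply/eqP => /rowP/(_ m); rewrite !mxE Dm s_m /=.
by apply/eqP; exact: oner_neq0.
Qed.
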